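(* Let $\varepsilon\ge0$ and let $X$ be any random variable taking values in $[d]$. If $\mathbf Z=(Z_1,\dots,Z_d)$ is obtained from $X$ by the unary-encoding mechanism with parameter $\varepsilon$, then $\{Z_1,\dots,Z_d\}$ is negatively associated.
   Context: Unary encoding with parameter $\varepsilon$: given $X=x\in[d]$, the coordinates $Z_1,\dots,Z_d$ are conditionally independent with $Z_j=\mathbb 1\{x=j\}$ with probability $\omega_{\varepsilon/2}$ and $Z_j=1-\mathbb 1\{x=j\}$ with probability $1-\omega_{\varepsilon/2}$, where $\omega_{\varepsilon/2}=e^{\varepsilon/2}/(e^{\varepsilon/2}+1)$. A collection of random variables $\{X_1,\dots,X_n\}$ is negatively associated if for every pair of disjoint $I_1,I_2\subseteq[n]$ with $I_1\cup I_2=[n]$, $\mathrm{Cov}(f(X_i:i\in I_1),g(X_{i'}:i'\in I_2))\le0$ for all real-valued $f,g$ that are both coordinatewise non-decreasing (equivalently both non-increasing). *)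

(* Defs.v *)
From mathcomp Require Import all_boot all_order all_algebra.
From mathcomp Require Import all_classical all_reals.
From mathcomp Require Import sequences exp.
Set Implicit Arguments. Unset Strict Implicit. Unset Printing Implicit Defensive.
Import Order.TTheory GRing.Theory Num.Theory.
Local Open Scope ring_scope.

Section UE.
Variable R : realType.

Definition omega_half (eps : R) : R := expR (eps / 2) / (expR (eps / 2) + 1).

Definition is_pmf (T : finType) (p : T -> R) : Prop :=
  (forall t, 0 <= p t) /\ \sum_(t : T) p t = 1.

(* Joint pmf of Z = (Z_1,...,Z_d) in {0,1}^d produced by unary encoding:
   P(Z = z) = sum_x P(X = x) prod_j P(Z_j = z_j | X = x), where
   Z_j = 1{x = j} w.p. omega and 1 - 1{x = j} w.p. 1 - omega. *)
Definition ue_pmf (d : nat) (eps : R) (p : 'I_d -> R)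
  (z : {ffun 'I_d -> bool}) : R :=
  \sum_(x : 'I_d) p x *
    \prod_(j : 'I_d) (if z j == (x == j) then omega_half eps
                      else 1 - omega_half eps).

Definition expect (d : nat) (P : {ffun 'I_d -> bool} -> R)
  (h : {ffun 'I_d -> bool} -> R) : R :=
  \sum_(z : {ffun 'I_d -> bool}) P z * h z.

Definition cov (d : nat) (P : {ffun 'I_d -> bool} -> R)
  (f g : {ffun 'I_d -> bool} -> R) : R :=
  expect P (fun z => f z * g z) - expect P f * expect P g.

Definition depends_only_on (d : nat) (I : {set 'I_d})
  (f : {ffun 'I_d -> bool} -> R) : Prop :=
  forall z z' : {ffun 'I_d -> bool}, (forall i, i \in I -> z i = z' i) -> f z = f z'.

Definition coord_nondecr (d : nat) (f : {ffun 'I_d -> bool} -> R) : Prop :=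
  forall z z' : {ffun 'I_d -> bool}, (forall i, z i ==> z' i) -> f z <= f z'.

Definition negatively_associated (d : nat) (P : {ffun 'I_d -> bool} -> R) : Prop :=
  forall (I1 I2 : {set 'I_d}), [disjoint I1 & I2] -> I1 :|: I2 = [set: 'I_d]%SET ->
  forall f g : {ffun 'I_d -> bool} -> R,
    depends_only_on I1 f -> depends_only_on I2 g ->
    coord_nondecr f -> coord_nondecr g ->
    cov P f g <= 0.
End UE.

(* Main.v *)
Require Import Defs.
From mathcomp Require Import all_boot all_order all_algebra.
From mathcomp Require Import all_classical all_reals.
From mathcomp Require Import sequences exp.
From mathcomp Require Import ring lra.
Set Implicit Arguments. Unset Strict Implicit. Unset Printing Implicit Defensive.
Import Order.TTheory GRing.Theory Num.Theory.
Local Open Scope ring_scope.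

Section Aux.
Variable R : realType.
Variable d : nat.
Variable q : R.
Hypothesis q0 : 0 <= q.
Hypothesis q1 : q <= 1.

Definition w (b : bool) : R := if b then q else 1 - q.
Definition Pi (z : {ffun 'I_d -> bool}) : R := \prod_j w (z j).
Definition E (h : {ffun 'I_d -> bool} -> R) := \sum_z Pi z * h z.
Definition ind (x : 'I_d) (z : {ffun 'I_d -> bool}) : R := (z x)%:R.

Lemma w_ge0 b : 0 <= w b.
Proof. by case: b => /=; rewrite ?subr_ge0. Qed.

Lemma Pi_ge0 z : 0 <= Pi z.
Proof. by apply: prodr_ge0 => j _; apply: w_ge0. Qed.

Lemma eq_E h h' : (forall z, h z = h' z) -> E h = E h'.
Proof. by move=> H; apply: eq_bigr => z _; rewrite H. Qed.

Lemma EZ c h : E (fun z => c * h z) = c * E h.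
Proof. rewrite /E mulr_sumr; apply: eq_bigr => z _; ring. Qed.

Lemma E1 : E (fun _ => 1) = 1.
Proof.
rewrite /E; under eq_bigr do rewrite mulr1.
rewrite /Pi -(bigA_distr_bigA (fun (j : 'I_d) (b : bool) => w b)).
apply: big1 => j _; rewrite big_bool /=; ring.
Qed.

Definition flip (x : 'I_d) (z : {ffun 'I_d -> bool}) : {ffun 'I_d -> bool} :=
  [ffun j => if j == x then ~~ z j else z j].

Lemma flipK x : involutive (flip x).
Proof.
move=> z; apply/ffunP => j; rewrite !ffunE.
by case: eqP => _ //; rewrite negbK.
Qed.

Lemma Pi_split x z : Pi z = w (z x) * \prod_(j | j != x) w (z j).
Proof. by rewrite /Pi (bigD1 x). Qed.

Lemma Pi_flip x z : Pi (flip x z) = w (~~ z x) * \prod_(j | j != x) w (z j).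
Proof.
rewrite (Pi_split x) ffunE eqxx; congr (_ * _).
by apply: eq_bigr => j /negbTE Hj; rewrite ffunE Hj.
Qed.

Lemma mono_cov (f : {ffun 'I_d -> bool} -> R) (x : 'I_d) :
  (forall z z' : {ffun 'I_d -> bool}, (forall i, z i ==> z' i) -> f z <= f z') ->
  0 <= E (fun z => f z * ind x z) - q * E f.
Proof.
move=> Hf.
set T := fun z => Pi z * f z * (ind x z - q).
have -> : E (fun z => f z * ind x z) - q * E f = \sum_z T z.
  rewrite /E mulr_sumr -sumrB; apply: eq_bigr => z _; rewrite /T; ring.
have HS : \sum_z T z = \sum_z T (flip x z).
  by rewrite (reindex_inj (can_inj (flipK x))).
suff : 0 <= \sum_z T z + \sum_z T z by lra.
rewrite {2}HS -big_split /=; apply: sumr_ge0 => z _.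
rewrite /T (Pi_flip x z) (Pi_split x z) /ind ffunE eqxx.
set P0 := \prod_(j | j != x) w (z j).
have P0ge : 0 <= P0 by apply: prodr_ge0 => j _; apply: w_ge0.
have q1' : 0 <= 1 - q by rewrite subr_ge0.
case Hz: (z x) => /=.
- have Hle : f (flip x z) <= f z.
    apply: Hf => i; rewrite ffunE; case: eqP => [->|_]; by rewrite ?Hz ?implybb.
  have -> : q * P0 * f z * (1%:R - q) + (1 - q) * P0 * f (flip x z) * (0%:R - q)
     = q * (1 - q) * P0 * (f z - f (flip x z)) by rewrite /= ; ring.
  by rewrite !mulr_ge0 // subr_ge0.
- have Hle : f z <= f (flip x z).
    apply: Hf => i; rewrite ffunE; case: eqP => [->|_]; by rewrite ?Hz ?implybb.
  have -> : (1 - q) * P0 * f z * (0%:R - q) + q * P0 * f (flip x z) * (1%:R - q)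
     = q * (1 - q) * P0 * (f (flip x z) - f z) by rewrite /= ; ring.
  by rewrite !mulr_ge0 // subr_ge0.
Qed.

Lemma Eind x : E (ind x) = q.
Proof.
have h1 : 0 <= E (fun z => 1 * ind x z) - q * E (fun _ => 1).
  exact: (@mono_cov (fun _ => 1) x (fun _ _ _ => lexx _)).
have h2 : 0 <= E (fun z => (-1) * ind x z) - q * E (fun _ => (-1) * 1).
  have := (@mono_cov (fun _ => -1) x (fun _ _ _ => lexx _)).
  by rewrite (@eq_E (fun _ => -1) (fun _ => (-1) * 1)) // => z; rewrite mulr1.
rewrite !EZ E1 in h1 h2.
lra.
Qed.

Lemma indep (I1 I2 : {set 'I_d}) (h1 h2 : {ffun 'I_d -> bool} -> R) :
  [disjoint I1 & I2] -> depends_only_on I1 h1 -> depends_only_on I2 h2 ->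
  E (fun z => h1 z * h2 z) = E h1 * E h2.
Proof.
move=> dis D1 D2.
pose sw (u : {ffun 'I_d -> bool} * {ffun 'I_d -> bool}) :=
  ([ffun j => if j \in I1 then u.1 j else u.2 j],
   [ffun j => if j \in I1 then u.2 j else u.1 j]).
have swK : involutive sw.
  move=> [a b]; rewrite /sw /=; congr (_, _); apply/ffunP => j; rewrite !ffunE;
  by case: (j \in I1).
pose G (u : {ffun 'I_d -> bool} * {ffun 'I_d -> bool}) :=
  Pi u.1 * h1 u.1 * (Pi u.2 * h2 u.2).
have -> : E h1 * E h2 = \sum_u G u.
  rewrite /E big_distrl /=; under eq_bigr do rewrite mulr_sumr.
  by rewrite pair_big /=.
rewrite (reindex_inj (can_inj swK)) /=.
have -> : \sum_u G (sw u) = \sum_u (Pi u.1 * (h1 u.1 * h2 u.1)) * Pi u.2.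
  apply: eq_bigr => -[a b] _; rewrite /G /sw /=.
  have e1 : h1 [ffun j => if j \in I1 then a j else b j] = h1 a.
    by apply: D1 => i Hi; rewrite ffunE Hi.
  have e2 : h2 [ffun j => if j \in I1 then b j else a j] = h2 a.
    by apply: D2 => i Hi; rewrite ffunE (disjointFl dis Hi).
  have e3 : Pi [ffun j => if j \in I1 then a j else b j] *
            Pi [ffun j => if j \in I1 then b j else a j] = Pi a * Pi b.
    rewrite /Pi -!big_split /=; apply: eq_bigr => j _; rewrite !ffunE.
    by case: (j \in I1) => //; rewrite mulrC.
  rewrite e1 e2; transitivity (Pi [ffun j => if j \in I1 then a j else b j] *
            Pi [ffun j => if j \in I1 then b j else a j] * (h1 a * h2 a)); first ring.
  rewrite e3; ring.
rewrite -(pair_big xpredT xpredT (fun a b => Pi a * (h1 a * h2 a) * Pi b)) /=.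
have E1' : \sum_z Pi z = 1 by rewrite -E1 /E; apply: eq_bigr => z _; rewrite mulr1.
rewrite /E; under eq_bigr do rewrite -mulr_sumr E1' mulr1.
by [].
Qed.

End Aux.

Lemma ab_aux (R : fieldType) (om : R) : om != 0 -> 1 - om != 0 ->
  (1 - om) / om = 1 - (om / (1 - om) - (1 - om) / om) * (1 - om).
Proof. move=> h1 h2. field. by rewrite h1 h2. Qed.

Lemma ft_aux (R : fieldType) (om : R) : om != 0 -> 1 - om != 0 ->
  om = (1 - om) * ((1 - om) / om + (om / (1 - om) - (1 - om) / om) * 1%:R).
Proof. move=> h1 h2. field. by rewrite h1 h2. Qed.

Lemma ff_aux (R : fieldType) (om : R) : om != 0 -> 1 - om != 0 ->
  1 - om = (1 - (1 - om)) * ((1 - om) / om + (om / (1 - om) - (1 - om) / om) * 0%:R).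
Proof. move=> h1 h2. field. by rewrite h1 h2. Qed.

Theorem mainTheorem9 (R : realType) (d : nat) (eps : R) (p : 'I_d -> R) :
  0 <= eps -> is_pmf p -> negatively_associated (ue_pmf eps p).
Proof.
move=> _ [p0 p1] I1 I2 dis UI f g D1 D2 Mf Mg.
have om0 : 0 < omega_half eps.
  by rewrite /omega_half divr_gt0 // ?addr_gt0 // expR_gt0.
have om1 : omega_half eps < 1.
  rewrite /omega_half ltr_pdivrMr ?addr_gt0 ?expR_gt0 // mul1r.
  by rewrite ltrDl.
pose q := 1 - omega_half eps.
have q0 : 0 < q by rewrite /q subr_gt0.
have q1 : q <= 1 by rewrite /q; lra.
have q0' : 0 <= q by apply: ltW.
pose a := q / omega_half eps.
pose b := omega_half eps / q - q / omega_half eps.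
have omn0 : omega_half eps != 0 by rewrite gt_eqF.
have qn0 : q != 0 by rewrite gt_eqF.
have ab : a = 1 - b * q.
  by rewrite /a /b /q; apply: ab_aux.
have Hprod : forall (x : 'I_d) (z : {ffun 'I_d -> bool}),
    \prod_j (if z j == (x == j) then omega_half eps else 1 - omega_half eps)
    = Pi q z * (a + b * ind R x z).
  move=> x z; rewrite (Pi_split q x) (bigD1 x) //= eqxx.
  rewrite (eq_bigr (fun j => w q (z j))); last first.
    move=> j Hj; have -> : (x == j) = false by rewrite eq_sym (negbTE Hj).
    by rewrite /w /q; case: (z j) => /=; ring.
  rewrite mulrAC; congr (_ * _).
  rewrite /ind /w; case: (z x) => /=.
  - by rewrite /a /b /q; apply: ft_aux.
  - by rewrite /a /b /q; apply: ff_aux.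
pose A := fun h : {ffun 'I_d -> bool} -> R =>
  \sum_x p x * E q (fun z => h z * ind R x z).
have HEP : forall h, expect (ue_pmf eps p) h = a * E q h + b * A h.
  move=> h; rewrite /expect /ue_pmf.
  under eq_bigr => z _ do rewrite big_distrl /=.
  rewrite exchange_big /=.
  transitivity (\sum_x p x * (a * E q h + b * E q (fun z => h z * ind R x z))).
    apply: eq_bigr => x _; rewrite /E mulrDr !mulr_sumr.
    rewrite -big_split /=; apply: eq_bigr => z _; rewrite Hprod; ring.
  under eq_bigr do rewrite mulrDr.
  rewrite big_split /=; congr (_ + _).
    by rewrite -big_distrl /= p1 mul1r.
  by rewrite /A mulr_sumr; apply: eq_bigr => x _; ring.
pose F := E q f. pose G := E q g.
have HEfg : E q (fun z => f z * g z) = F * G := indep q dis D1 D2.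
have dis' : [disjoint I2 & I1] by rewrite disjoint_sym.
have HAfg : A (fun z => f z * g z) = A f * G + F * A g - q * F * G.
  transitivity (\sum_x (p x * E q (fun z => f z * ind R x z) * G
       + F * (p x * E q (fun z => g z * ind R x z)) - q * F * G * p x)).
    apply: eq_bigr => x _.
    have : x \in I1 :|: I2 by rewrite UI inE.
    rewrite inE => /orP [Hx|Hx].
    - have Dfx : depends_only_on I1 (fun z => f z * ind R x z).
        by move=> z z' H; rewrite /ind (H x Hx) (D1 z z' H).
      have Dx : depends_only_on I1 (ind R x) by move=> z z' H; rewrite /ind H.
      rewrite (@eq_E _ _ q _ (fun z => (f z * ind R x z) * g z)); last by move=> z; ring.
      rewrite (indep q dis Dfx D2).
      rewrite (@eq_E _ _ q (fun z => g z * ind R x z) (fun z => ind R x z * g z)); last by move=> z; ring.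
      rewrite (indep q dis Dx D2) (Eind q0' q1) -/G; ring.
    - have Dgx : depends_only_on I2 (fun z => g z * ind R x z).
        by move=> z z' H; rewrite /ind (H x Hx) (D2 z z' H).
      have Dx : depends_only_on I2 (ind R x) by move=> z z' H; rewrite /ind H.
      rewrite (@eq_E _ _ q _ (fun z => f z * (g z * ind R x z))); last by move=> z; ring.
      rewrite (indep q dis D1 Dgx).
      rewrite (indep q dis D1 Dx) (Eind q0' q1) -/F; ring.
  rewrite sumrB big_split /= -big_distrl -mulr_sumr -mulr_sumr p1 mulr1 /A.
  by [].
have HA : forall h, coord_nondecr h -> 0 <= A h - q * E q h.
  move=> h Mh.
  have -> : A h - q * E q h = \sum_x p x * (E q (fun z => h z * ind R x z) - q * E q h).
    rewrite /A; under [RHS]eq_bigr do rewrite mulrBr.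
    by rewrite sumrB -big_distrl /= p1 mul1r.
  apply: sumr_ge0 => x _; apply: mulr_ge0 => //.
  exact: mono_cov.
have Hf := HA f Mf. have Hg := HA g Mg.
rewrite /cov !HEP HEfg HAfg -/F -/G.
have -> : a * (F * G) + b * (A f * G + F * A g - q * F * G) -
    (a * F + b * A f) * (a * G + b * A g)
    = - (b ^+ 2 * ((A f - q * F) * (A g - q * G))).
  rewrite ab; ring.
rewrite oppr_le0; apply: mulr_ge0; first exact: sqr_ge0.
exact: mulr_ge0.
Qed.
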